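(* Let $F$ be a continuous distribution function with $F(0)=0$ and density $f:[0,\infty)\to[0,\infty)$, such that there are constants $c>0$, $\tau>3$ with $1-F(x)\le cx^{1-\tau}$ for all $x\ge0$. Assume further that there exists $a>0$ such that, as $y\downarrow0$, $$\int_y^1\frac{\bar F^{-1}(u)}{\underline f(\bar F^{-1}(u))}\,du=O(y^{-a}),$$ where $\underline f(x)=\inf_{0\le y\le x}f(y)$. For $u\in(0,1)$ let $u_N=\lceil uN\rceil/N$. Then there exists $\alpha>0$ such that $$\int_0^1\bar F^{-1}(u)\big(\bar F^{-1}(u)-\bar F^{-1}(u_N)\big)\,du=O(N^{-\alpha}),$$ and, for $i=1,2$, $$\int_0^1\big(\bar F^{-1}(u)^i-\bar F^{-1}(u_N)^i\big)\,du=O(N^{-\alpha}).$$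
   Context: $\bar F(x)=1-F(x)$ and, for $u\in(0,1)$, $\bar F^{-1}(u)=\inf\{s:\bar F(s)\le u\}$ (so $\bar F^{-1}$ is non-increasing and $\bar F^{-1}(U)$ has distribution $F$ for $U$ uniform on $(0,1)$). *)

(* Defs.v *)
From HB Require Import structures.
From mathcomp Require Import all_boot all_order all_algebra.
From mathcomp Require Import all_classical all_reals all_analysis.
Set Implicit Arguments. Unset Strict Implicit. Unset Printing Implicit Defensive.
Import Order.TTheory GRing.Theory Num.Theory.
Import numFieldNormedType.Exports.
Local Open Scope classical_set_scope.
Local Open Scope ring_scope.

(* Generalized inverse of the survival function Fbar = 1 - F,
   Fbar^{-1}(u) = inf {s : Fbar s <= u}; the infimum is taken over s >= 0,
   which does not change the value for u in (0,1) (there F s = 0 for s <= 0),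
   and gives the natural value Fbar^{-1}(1) = 0 for a distribution on [0,oo). *)
Definition Fbar_inv (R : realType) (F : R -> R) (u : R) : R :=
  inf [set s : R | 0 <= s /\ 1 - F s <= u].

Definition f_low (R : realType) (f : R -> R) (x : R) : R :=
  inf [set f y | y in `[0, x]%classic].

Definition uN (R : realType) (N : nat) (u : R) : R :=
  (Num.ceil (u * N%:R))%:~R / N%:R.

(* Main.v *)
Require Import Defs.
From HB Require Import structures.
From mathcomp Require Import all_boot all_order all_algebra.
From mathcomp Require Import all_classical all_reals all_analysis.
Set Implicit Arguments. Unset Strict Implicit. Unset Printing Implicit Defensive.
Import Order.TTheory GRing.Theory Num.Theory.
Import numFieldNormedType.Exports.
Local Open Scope classical_set_scope.
Local Open Scope ring_scope.

From mathcomp Require Import ring lra measurable_realfun.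
Section S.
Context {R : realType}.
Local Notation mu := (@lebesgue_measure R).

Lemma natr_int (n : nat) : (n%:Z)%:~R = n%:R :> R.
Proof. by []. Qed.

Lemma uN_ge (N : nat) (u : R) : (0 < N)%N -> u <= uN N u.
Proof.
move=> N0; have N0' : (0:R) < N%:R by rewrite ltr0n.
by rewrite /uN ler_pdivlMr// ceil_ge.
Qed.

Lemma uN_le1 (N : nat) (u : R) : (0 < N)%N -> u <= 1 -> uN N u <= 1.
Proof.
move=> N0 u1; have N0' : (0:R) < N%:R by rewrite ltr0n.
rewrite /uN ler_pdivrMr// mul1r.
have : Num.ceil (u * N%:R) <= N%:Z.
  by rewrite ceil_le_int natr_int -{2}(mul1r N%:R) ler_pM2r.
by rewrite -(ler_int R) natr_int.
Qed.

Lemma uN_mono (N : nat) (u v : R) : (0 < N)%N -> u <= v -> uN N u <= uN N v.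
Proof.
move=> N0 uv; have N0' : (0:R) < N%:R by rewrite ltr0n.
by rewrite /uN ler_pM2r ?invr_gt0// ler_int le_ceil// ler_pM2r.
Qed.

Lemma uN_piece (N m : nat) (u : R) : (0 < N)%N -> m%:R / N%:R < u <= m.+1%:R / N%:R ->
  uN N u = m.+1%:R / N%:R.
Proof.
move=> N0 /andP[mu um]; have N0' : (0:R) < N%:R by rewrite ltr0n.
rewrite /uN (@ceil_def _ _ m.+1%:Z) // natr_int; apply/andP; split.
  rewrite -ltr_pdivrMr//; apply: le_lt_trans mu.
  by rewrite ?subn1 ?subSS ?subn0.
by rewrite -ler_pdivlMr.
Qed.

Definition clamp (a : R) (x : R) := if x < a then a else if 1 < x then 1 else x.

Lemma clamp_nd a : a <= 1 -> {homo clamp a : x y / x <= y}.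
Proof.
move=> a1 x y xy; rewrite /clamp.
case: (ltP x a) => xa; case: (ltP y a) => ya; case: (ltP 1 x) => x1; case: (ltP 1 y) => y1 //;
  lra.
Qed.

Lemma mono_meas_a (phi : R -> R) (a : R) :
  (forall u v, 0 < u -> u <= v -> v <= 1 -> phi v <= phi u) -> 0 < a -> a <= 1 ->
  measurable_fun (`[a, 1] : set R) phi.
Proof.
move=> phim a0 a1.
apply: (@eq_measurable_fun _ _ _ _ _ (phi \o clamp a)).
  move=> x; rewrite inE /= in_itv /= => /andP[ax x1].
  by rewrite /= /clamp ltNge ax /= ltNge x1.
apply: nonincreasing_measurable; first exact: measurable_itv.
move=> x y xy /=.
have := clamp_nd a1 xy; set cx := clamp _ x; set cy := clamp _ y => cxy.
apply: phim => //.
  by rewrite /cx /clamp; case: (ltP x) => ?; [|case: (ltP 1 x) => ?]; lra.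
by rewrite /cy /clamp; case: (ltP y) => ?; [|case: (ltP 1 y) => ?]; lra.
Qed.

Lemma mono_meas01 (phi : R -> R) :
  (forall u v, 0 < u -> u <= v -> v <= 1 -> phi v <= phi u) ->
  measurable_fun (`]0, 1] : set R) phi.
Proof.
move=> phim.
pose E n : set R := `[(n.+1%:R)^-1, 1]%classic.
apply: (@measurable_funS _ _ _ _ (\bigcup_n E n)).
- by apply: bigcup_measurable => n _; exact: measurable_itv.
- move=> x /=; rewrite in_itv /= => /andP[x0 x1].
  exists (Num.truncn x^-1) => //=; rewrite /E /= in_itv /= x1 andbT.
  rewrite invf_ple ?posrE ?ltr0n//; exact: ltW (truncnS_gt _).
- apply/measurable_fun_bigcup => [n|n]; first exact: measurable_itv.
  apply: mono_meas_a => //.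
  by rewrite invf_le1 ?ler1n ?ltr0n.
Qed.

Lemma le_int_free (D D' : set R) (f g : R -> \bar R) :
  D `<=` D' -> (forall x, D x -> (0 <= f x)%E) -> (forall x, D' x -> (0 <= g x)%E) ->
  (forall x, D x -> (f x <= g x)%E) ->
  (\int[mu]_(x in D) f x <= \int[mu]_(x in D') g x)%E.
Proof.
move=> DD' f0 g0 fg; rewrite (ge0_integralE mu f0) (ge0_integralE mu g0).
apply: le_ereal_sup => _ /= [h hf <-]; exists h => //= x.
have := hf x; rewrite /patch; case: ifPn => [|xD].
  rewrite inE => xD; rewrite mem_set; last exact: DD'.
  by move=> /le_trans; apply; exact: fg.
case: ifPn => [|_ //]; rewrite inE => xD' /le_trans; apply; exact: g0.
Qed.

Lemma powRE' (x r : R) : 0 < x -> x `^ r = expR (r * ln x).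
Proof. by move=> x0; rewrite /powR gt_eqF. Qed.

Lemma dy_alg (K b d : R) (i : nat) : 0 < d ->
  K * (d / 2 ^+ i.+1) `^ (- b) * (d / 2 ^+ i - d / 2 ^+ i.+1) =
  K * d `^ (1 - b) * expR (- ((1 - b) * ln 2)) ^+ i.+1.
Proof.
move=> d0.
have p0 : (0:R) < 2 ^+ i.+1 by rewrite exprn_gt0.
have x0 : 0 < d / 2 ^+ i.+1 by rewrite divr_gt0.
have -> : d / 2 ^+ i - d / 2 ^+ i.+1 = d / 2 ^+ i.+1.
  rewrite exprS; have h2 : (2:R) ^+ i != 0 by rewrite expf_neq0.
  by field.
rewrite -!mulrA; congr (K * _).
rewrite !powRE' // -{2}(lnK x0) /= -expRD.
rewrite -expRM_natl -expRD; congr expR.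
rewrite lnM ?posrE ?invr_gt0 // lnV ?posrE // lnXn //.
rewrite -mulr_natl; ring.
Qed.

Lemma dmono (d : R) (m n : nat) : 0 <= d -> (m <= n)%N -> d / 2 ^+ n <= d / 2 ^+ m.
Proof.
move=> d0 mn; apply: ler_wpM2l => //.
rewrite lef_pV2 ?posrE ?exprn_gt0 //.
by rewrite ler_eXn2l // ltr1n.
Qed.

Lemma dy_cover (d u : R) : 0 < u -> u <= d -> exists j : nat, d / 2 ^+ j.+1 < u <= d / 2 ^+ j.
Proof.
move=> u0 ud.
have d0 : 0 < d by exact: lt_le_trans ud.
have exP : exists n : nat, d / 2 ^+ n.+1 < u.
  exists (Num.truncn (d / u)).
  set n := Num.truncn (d / u).
  have h1 : d / u < n.+1%:R by exact: truncnS_gt.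
  have h2 : (n.+1%:R : R) <= 2 ^+ n.+1.
    by rewrite -natrX ler_nat ltnW // ltn_expl.
  rewrite ltr_pdivrMr ?exprn_gt0 //.
  rewrite ltr_pdivrMr // in h1.
  apply: lt_le_trans h1 _; rewrite mulrC ler_pM2l //.
case: (ex_minnP exP) => j Pj minj.
exists j; rewrite Pj /=.
case: j Pj minj => [|k] Pk mink; first by rewrite expr0 divr1.
rewrite leNgt; apply/negP => /mink; by rewrite ltnn.
Qed.

Lemma dy_triv (d : R) : 0 <= d ->
  trivIset setT (fun j : nat => (`](d / 2 ^+ j.+1), (d / 2 ^+ j)]%classic : set R)).
Proof.
move=> d0 i j _ _ [u [] /=]; rewrite !in_itv /= => /andP[iu ui] /andP[ju uj].
case: (ltngtP i j) => // ij.
  by have := le_lt_trans (le_trans uj (dmono d0 ij)) iu; rewrite ltxx.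
by have := le_lt_trans (le_trans ui (dmono d0 ij)) ju; rewrite ltxx.
Qed.
Lemma G_ge0 (F : R -> R) u : 0 <= Fbar_inv F u.
Proof.
rewrite /Fbar_inv; set E := [set s | _].
have [[s Es]|] := pselect (exists s, E s).
  by apply: lb_le_inf; [exists s|move=> t [] ].
move=> nE; rewrite (_ : E = set0) ?inf0//; apply/seteqP; split=> // s Es.
by apply: nE; exists s.
Qed.

Lemma G_le (F : R -> R) u s : 0 <= s -> 1 - F s <= u -> Fbar_inv F u <= s.
Proof.
move=> s0 Fs; apply: ge_inf; last by split.
by exists 0 => t [].
Qed.

Lemma G_anti (F : R -> R) u v s : 0 <= s -> 1 - F s <= u -> u <= v ->
  Fbar_inv F v <= Fbar_inv F u.
Proof.
move=> s0 Fs uv; apply: lb_le_inf; first by exists s.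
move=> t [t0 Ft]; apply: G_le => //; exact: le_trans uv.
Qed.

Section Main.
Context (H : R -> R).
Context (Hm : forall u v, 0 < u -> u <= v -> v <= 1 -> H v <= H u).
Context (H0 : forall u, 0 < u -> u <= 1 -> 0 <= H u).

Lemma hN_ge0 N u : (0 < N)%N -> 0 < u -> u <= 1 -> 0 <= H u - H (uN N u).
Proof.
move=> N0 u0 u1; rewrite subr_ge0; apply: Hm => //; [exact: uN_ge | exact: uN_le1].
Qed.

Lemma hN_meas N : (0 < N)%N ->
  measurable_fun (`]0, 1] : set R) (fun u => H u - H (uN N u)).
Proof.
move=> N0; apply: measurable_funB; first exact: (mono_meas01 Hm).
apply: mono_meas01 => u v u0 uv v1; apply: Hm.
- exact: lt_le_trans u0 (uN_ge _ N0).
- exact: uN_mono.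
- exact: uN_le1.
Qed.

Lemma stepB (N : nat) : (0 < N)%N -> forall m : nat, (0 < m)%N -> (m <= N)%N ->
 (\int[mu]_(u in (`]0%R, (m%:R / N%:R)%R] : set R)) (H u - H (uN N u))%:E <=
  \int[mu]_(u in (`]0%R, (1 / N%:R)%R] : set R)) (H u)%:E +
   (((H (1 / N%:R) - H (m%:R / N%:R)) / N%:R)%R)%:E)%E.
Proof.
move=> N0; have N0' : (0:R) < N%:R by rewrite ltr0n.
elim => [//|m IH] _ mN.
case: m IH mN => [|m] IH mN.
  rewrite mulr1n subrr mul0r adde0; apply: le_int_free => // x.
  - rewrite /= in_itv /= => /andP[x0 x1].
    have x1' : x <= 1 by apply: le_trans x1 _; rewrite ler_pdivrMr // mul1r ler1n.
    by rewrite lee_fin hN_ge0.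
  - rewrite /= in_itv /= => /andP[x0 x1].
    have x1' : x <= 1 by apply: le_trans x1 _; rewrite ler_pdivrMr // mul1r ler1n.
    by rewrite lee_fin H0.
  - rewrite /= in_itv /= => /andP[x0 x1].
    have x1' : x <= 1 by apply: le_trans x1 _; rewrite ler_pdivrMr // mul1r ler1n.
    rewrite lee_fin lerBlDr lerDl H0 //.
      exact: lt_le_trans x0 (uN_ge _ N0).
    exact: uN_le1.
set a := (m.+1%:R / N%:R : R); set c := (m.+2%:R / N%:R : R).
have a0 : 0 < a by rewrite divr_gt0 // ltr0n.
have ac : a < c by rewrite ltr_pM2r ?invr_gt0 // ltr_nat.
have c1 : c <= 1 by rewrite ler_pdivrMr // mul1r ler_nat.
rewrite (@itv_bndbnd_setU _ _ (BRight 0) (BRight a) (BRight c)); last 2 first.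
  by rewrite bnd_simp ltW.
  by rewrite bnd_simp ltW.
rewrite ge0_integral_setU //; last 3 first.
- rewrite -itv_bndbnd_setU; last 2 first.
    by rewrite bnd_simp ltW.
    by rewrite bnd_simp ltW.
  apply/measurable_EFinP; apply: (measurable_funS _ _ (hN_meas N0)) => //.
  move=> x /=; rewrite !in_itv /= => /andP[-> /= xc]; exact: le_trans c1.
- move=> x [] /=; rewrite in_itv /= => /andP[x0 x1]; rewrite lee_fin hN_ge0 //.
  + by apply: le_trans c1; apply: le_trans x1 (ltW ac).
  + by apply: lt_trans x0.
  + by apply: le_trans c1.
- rewrite disj_set2E; apply/eqP/seteqP; split => // x [] /=.
  by rewrite !in_itv /= => /andP[_ xa] /andP[ax _]; move: (lt_le_trans ax xa); rewrite ltxx.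
have piece : (\int[mu]_(u in (`]a, c] : set R)) (H u - H (uN N u))%:E <=
   (((H a - H c) * (c - a))%R)%:E)%E.
  apply: le_trans (_ : (\int[mu]_(u in (`]a, c] : set R)) (cst ((H a - H c)%R)%:E) u <= _)%E).
    apply: le_int_free => // x; rewrite /= in_itv /= => /andP[ax xc].
    + by rewrite lee_fin hN_ge0 //; [exact: lt_trans ax| exact: le_trans c1].
    + by rewrite lee_fin subr_ge0; apply: Hm => //; exact: ltW.
    + rewrite lee_fin (uN_piece N0 (m := m.+1)); last by rewrite ax xc.
      by rewrite lerD2r; apply: Hm => //; [exact: ltW | exact: le_trans c1].
  have mI : measurable (`]a, c] : set R) by exact: measurable_itv.
  by rewrite integral_cst//= lebesgue_measure_itv/= lte_fin ac /= -EFinB -EFinM.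
apply: le_trans (leeD (IH isT (ltnW mN)) piece) _.
rewrite -addeA -EFinD; apply: leeD => //; rewrite lee_fin.
have ca : c - a = 1 / N%:R.
  by rewrite /a /c -mulrBl -natrB // subSn // subnn.
have Nn0 : (N%:R : R) != 0 by rewrite gt_eqF.
rewrite ca le_eqVlt; apply/orP; left; apply/eqP.
by field.
Qed.

Context (K b : R) (K0 : 0 <= K) (b0 : 0 <= b) (b1 : b < 1).
Context (HK : forall u, 0 < u -> u <= 1 -> H u <= K * u `^ (- b)).

Let z := expR (- ((1 - b) * ln 2)).

Lemma z_lt1 : z < 1.
Proof.
rewrite /z expR_lt1 oppr_lt0; apply: mulr_gt0; first by rewrite subr_gt0.
by rewrite ln_gt0 // ltr1n.
Qed.

Lemma stepA (d : R) : 0 < d -> d <= 1 ->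
  (\int[mu]_(u in (`]0%R, d] : set R)) (H u)%:E <=
   ((K * d `^ (1 - b) * z) / (1 - z))%:E)%E.
Proof.
move=> d0 d1.
pose A j : set R := `](d / 2 ^+ j.+1), (d / 2 ^+ j)]%classic.
have Asub : \bigcup_j A j `<=` (`]0%R, 1] : set R).
  move=> u [j _] /=; rewrite !in_itv /= => /andP[]; rewrite ?bnd_simp => ju uj.
  apply/andP; split.
    by apply: le_lt_trans ju; rewrite divr_ge0 // ?exprn_ge0 // ltW.
  apply: le_trans uj _; apply: le_trans d1 .
  by have := dmono (ltW d0) (leq0n j); rewrite expr0 divr1.
apply: (@le_trans _ _ (\int[mu]_(u in \bigcup_j A j) (H u)%:E)%E).
  apply: le_int_free.
  - move=> u /=; rewrite in_itv /= => /andP[u0 ud].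
    by have [j hj] := dy_cover u0 ud; exists j.
  - move=> u /=; rewrite in_itv /= => /andP[u0 ud].
    by rewrite lee_fin H0 // (le_trans ud d1).
  - move=> u hu; have := Asub u hu; rewrite /= in_itv /= => /andP[u0 u1].
    by rewrite lee_fin H0.
  - by [].
rewrite ge0_integral_bigcup //; last 4 first.
- by move=> j; rewrite /A; exact: measurable_itv.
- apply/measurable_EFinP.
  exact: (measurable_funS (measurable_itv _) Asub (mono_meas01 Hm)).
- move=> u hu; have := Asub u hu; rewrite /= in_itv /= => /andP[u0 u1].
  by rewrite lee_fin H0.
- exact: dy_triv (ltW d0).
have A01 : forall i u, A i u -> 0 < u <= 1.
  by move=> i u hu; have := Asub u (ex_intro2 _ _ i I hu); rewrite /= in_itv.
apply: lime_le.
  apply: is_cvg_nneseries => n _ _; apply: integral_ge0 => u /A01 /andP[u0 u1].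
  by rewrite lee_fin H0.
apply: nearW => n.
apply: (@le_trans _ _ (\sum_(0 <= i < n) ((K * d `^ (1 - b) * z) * z ^+ i)%:E)%E).
  apply: lee_sum => i _.
  set x := d / 2 ^+ i.+1.
  have x0 : 0 < x by rewrite divr_gt0 // exprn_gt0.
  have x1 : x <= 1.
    apply: le_trans d1; rewrite /x.
    by have := dmono (ltW d0) (leq0n i.+1); rewrite expr0 divr1.
  have xd : x < d / 2 ^+ i.
    rewrite /x ltr_pM2l // ltf_pV2 ?posrE ?exprn_gt0 //.
    by rewrite ltr_eXn2l // ltr1n.
  apply: (@le_trans _ _ (\int[mu]_(u in A i) (cst ((K * x `^ (- b))%R)%:E) u)%E).
    apply: le_int_free => //.
    - by move=> u /A01 /andP[u0 u1]; rewrite lee_fin H0.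
    - by move=> u _; rewrite lee_fin mulr_ge0 // powR_ge0.
    - move=> u hu; have /andP[u0 u1] := A01 _ _ hu.
      move: hu; rewrite /A /= in_itv /= => /andP[xu _].
      rewrite lee_fin; apply: le_trans (HK x0 x1).
      by apply: Hm => //; exact: ltW.
  rewrite integral_cst//=; last by rewrite /A; exact: measurable_itv.
  have -> : mu (A i) = (d / 2 ^+ i - x)%:E.
    by rewrite /A /= lebesgue_measure_itv/= lte_fin xd /= -EFinB.
  rewrite -EFinM lee_fin.
  by rewrite /x dy_alg // exprS !mulrA.
rewrite sumEFin lee_fin.
have zpos : 0 < z by rewrite /z expR_gt0.
have := @geometric_le_lim R n (K * d `^ (1 - b) * z) z.
rewrite /series /geometric /=.
move=> -> //.
- by rewrite !mulr_ge0 ?powR_ge0 // ltW.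
- by rewrite ger0_norm ?z_lt1 // ltW.
Qed.


Lemma powR_mulx (x r : R) : 0 < x -> x `^ (- r) * x = x `^ (1 - r).
Proof.
move=> x0; rewrite !powRE' // -{2}(lnK x0) /= -expRD; congr expR; ring.
Qed.

Lemma Lmain (N : nat) : (0 < N)%N ->
  (\int[mu]_(u in (`]0%R, 1%R] : set R)) (H u - H (uN N u))%:E <=
   ((K * (z / (1 - z) + 1)) * N%:R `^ (b - 1))%:E)%E.
Proof.
move=> N0; have N0' : (0:R) < N%:R by rewrite ltr0n.
have := stepB N0 N0 (leqnn N); rewrite divff ?gt_eqF // => /le_trans; apply.
have d0 : (0:R) < 1 / N%:R by rewrite divr_gt0.
have d1 : 1 / N%:R <= 1 :> R by rewrite ler_pdivrMr // mul1r ler1n.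
apply: le_trans (leeD (stepA d0 d1) (lexx _)) _.
rewrite -EFinD lee_fin.
have q : (1 / N%:R) `^ (1 - b) = N%:R `^ (b - 1).
  rewrite !powRE' // mul1r lnV ?posrE //; congr expR; ring.
have h1 : (H (1 / N%:R) - H 1) / N%:R <= K * (1 / N%:R) `^ (1 - b).
  rewrite -powR_mulx // mulrA.
  rewrite (_ : (H (1 / N%:R) - H 1) / N%:R = (H (1 / N%:R) - H 1) * (1 / N%:R)); last by rewrite mul1r.
  rewrite ler_pM2r // lerBlDr; apply: le_trans (HK d0 d1) _; rewrite lerDl; exact: H0.
rewrite q in h1 *.
have zl : z < 1 := z_lt1.
set Q := N%:R `^ (b - 1) in h1 *.
have zn : 1 - z != 0 by rewrite subr_eq0 eq_sym lt_eqF.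
have -> : K * Q * z / (1 - z) = K * (z / (1 - z)) * Q by field.
rewrite mulrDr mulr1 mulrDl lerD2l; exact: h1.
Qed.

Lemma final_int (phi : R -> R) (N : nat) : (0 < N)%N ->
  (forall u, 0 < u < 1 -> 0 <= phi u <= H u - H (uN N u)) ->
  (`| \int[mu]_(u in (`]0%R, 1%R[ : set R)) (phi u)%:E | <=
   ((K * (z / (1 - z) + 1)) * N%:R `^ (- (1 - b)))%:E)%E.
Proof.
move=> N0 hphi; rewrite opprB.
rewrite gee0_abs; last first.
  by apply: integral_ge0 => u /=; rewrite in_itv /= => /hphi /andP[p0 _]; rewrite lee_fin.
apply: le_trans (Lmain N0); apply: le_int_free.
- by move=> u /=; rewrite !in_itv /= => /andP[-> /ltW ->].
- by move=> u /=; rewrite in_itv /= => /hphi /andP[p0 _]; rewrite lee_fin.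
- by move=> u /=; rewrite in_itv /= => /andP[u0 u1]; rewrite lee_fin hN_ge0.
- by move=> u /=; rewrite in_itv /= => /hphi /andP[_ p1]; rewrite lee_fin.
Qed.
End Main.
End S.

Unset Implicit Arguments. Set Strict Implicit.

Theorem lemmaB1 (R : realType) (F f : R -> R) (c tau : R) :
  (* F is a continuous distribution function *)
  {homo F : x y / x <= y} ->
  continuous F ->
  (F x @[x --> -oo] --> (0:R)) ->
  (F x @[x --> +oo] --> (1:R)) ->
  F 0 = 0 ->
  (* with density f : [0,oo) -> [0,oo) *)
  (forall x, 0 <= x -> 0 <= f x) ->
  measurable_fun (`[0, +oo[%classic : set R) f ->
  (forall x, 0 <= x ->
     (F x)%:E = (\int[@lebesgue_measure R]_(y in (`[0%R, x]%classic : set R)) (f y)%:E)%E) ->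
  (* tail bound *)
  0 < c -> 3 < tau ->
  (forall x, 0 < x -> 1 - F x <= c * x `^ (1 - tau)) ->
  (* integral condition, as y decreases to 0 *)
  (exists a, 0 < a /\ exists C d, 0 < d /\ forall y, 0 < y < d ->
     (\int[@lebesgue_measure R]_(u in (`[y, 1%R]%classic : set R))
        ((Fbar_inv F u)%:E * ((f_low f (Fbar_inv F u))%:E)^-1)
      <= (C * y `^ (- a))%:E)%E) ->
  exists alpha, 0 < alpha /\
    (exists C (N0 : nat), forall N : nat, (N0 <= N)%N ->
       (`| \int[@lebesgue_measure R]_(u in (`]0%R, 1%R[%classic : set R))
            (Fbar_inv F u * (Fbar_inv F u - Fbar_inv F (uN N u)))%:E |
        <= (C * N%:R `^ (- alpha))%:E)%E) /\
    (forall i : nat, (i = 1 \/ i = 2)%N ->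
     exists C (N0 : nat), forall N : nat, (N0 <= N)%N ->
       (`| \int[@lebesgue_measure R]_(u in (`]0%R, 1%R[%classic : set R))
            (Fbar_inv F u ^+ i - Fbar_inv F (uN N u) ^+ i)%:E |
        <= (C * N%:R `^ (- alpha))%:E)%E).
Proof.
move=> Fnd Fc Fny Fy F0 f0 mf Fint c0 tau3 Ftail _.
set p := (tau - 1)^-1.
set b := 2 * p.
set G := Fbar_inv F.
have tau1 : 0 < tau - 1 by lra.
have p0 : 0 < p by rewrite invr_gt0.
have b0 : 0 <= b by rewrite mulr_ge0 // ltW.
have b1 : b < 1 by rewrite /b /p ltr_pdivrMr // mul1r; lra.
have memb : forall u, 0 < u -> 1 - F ((c / u) `^ p) <= u.
  move=> u u0; have cu : 0 < c / u by rewrite divr_gt0.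
  apply: le_trans (Ftail _ (powR_gt0 _ cu)) _.
  rewrite -powRrM (_ : p * (1 - tau) = -1); last first.
    rewrite /p; have tn : tau - 1 != 0 by rewrite gt_eqF.
    by field.
  by rewrite (powR_inv1 (ltW cu)) invf_div mulrC divfK ?gt_eqF.
have Gub : forall u, 0 < u -> G u <= (c / u) `^ p.
  by move=> u0 hu0; exact: (G_le (powR_ge0 _ _) (memb u0 hu0)).
have Ganti : forall u v, 0 < u -> u <= v -> G v <= G u.
  by move=> u0 v0 hu0 uv; exact: (G_anti (powR_ge0 _ _) (memb u0 hu0) uv).
have G0 : forall u, 0 <= G u by move=> u; exact: G_ge0.
pose H u := G u ^+ 2 + G u.
have Hm : forall u v, 0 < u -> u <= v -> v <= 1 -> H v <= H u.
  move=> u v u0 uv _; have := Ganti u v u0 uv; have := G0 v; rewrite /H; nra.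
have H0 : forall u, 0 < u -> u <= 1 -> 0 <= H u.
  by move=> u _ _; rewrite /H addr_ge0 ?sqr_ge0.
set A := c `^ p.
set K := A ^+ 2 + A.
have K0 : 0 <= K by rewrite /K addr_ge0 ?sqr_ge0 ?powR_ge0.
have HK : forall u, 0 < u -> u <= 1 -> H u <= K * u `^ (- b).
  move=> u u0 u1.
  set w := expR (- (p * ln u)).
  have w1 : 1 <= w.
    apply: le_trans (expR_ge1Dx _); rewrite lerDl oppr_ge0.
    by rewrite pmulr_rle0 // ln_le0.
  have e1 : (c / u) `^ p = A * w.
    rewrite /A /w !powRE' ?divr_gt0 // -expRD ln_div ?posrE //; congr expR; ring.
  have e2 : u `^ (- b) = w ^+ 2.
    rewrite /w powRE' // -expRM_natl; congr expR; rewrite /b; ring.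
  have := Gub u u0; rewrite e1 e2 /H /K => hG.
  have A0 : 0 <= A by exact: powR_ge0.
  have := G0 u; nra.
exists (1 - b); split; first lra.
have key : forall N : nat, (0 < N)%N -> forall u, 0 < u < 1 ->
    0 <= G (uN N u) <= G u.
  move=> N N0 u /andP[u0 u1]; rewrite G0 /=; apply: Ganti => //; exact: uN_ge.
split.
  eexists; exists 1%N => N N1.
  apply: (final_int Hm H0 K0 b1 HK N1) => u hu.
  have /andP[g0 g1] := key N N1 u hu; have := G0 u; rewrite /H => ?; apply/andP; split; nra.
move=> i hi; eexists; exists 1%N => N N1.
apply: (final_int Hm H0 K0 b1 HK N1) => u hu.
have /andP[g0 g1] := key N N1 u hu; have := G0 u; rewrite /H.
case: hi => ->; rewrite ?expr1 ?expr2 => ?; apply/andP; split; nra.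
Qed.
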